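(* Let $f$ be a homeomorphism of a compact metric space $(X,d)$ and let $\mu$ be a Borel measure on $X$ with $\mu(X)>0$. Then: (i) $\mu$ is expansive with respect to $f$ if and only if $UE^\mu_f(X)=X$; (ii) $f$ is measure-expansive if and only if $UE^M_f(X)=X$; (iii) $\mu$ has shadowing with respect to $f$ if and only if $Sh^\mu_f(X)=X$.
   Context: $B(x,\epsilon)=\{y:d(x,y)<\epsilon\}$. For $\mathfrak{c}>0$ and $x\in X$, $\Phi^{\mathfrak{c}}_f(x)=\{y\in X: d(f^n(x),f^n(y))\le\mathfrak{c}\ \forall n\in\mathbb{Z}\}$. $\mu$ is expansive (w.r.t. $f$) if there is $\mathfrak{c}>0$ with $\mu(\Phi^{\mathfrak{c}}_f(x))=0$ for every $x\in X$. $f$ is measure-expansive if there is $\mathfrak{c}>0$ such that for every non-atomic Borel measure $\nu$ on $X$ and every $x\in X$, $\nu(\Phi^{\mathfrak{c}}_f(x))=0$. For a point $x$ and $\mathfrak{c}>0$, and $z\in B(x,\mathfrak{c})$, let $\Gamma^{\mathfrak{c}}_f(z)=\{y\in B(x,\mathfrak{c}): d(f^n(y),f^n(z))\le\mathfrak{c}\ \forall n\in\mathbb{Z}\}$. $x$ is a $\mu$-uniformly expansive point of $f$ if there is $\mathfrak{c}>0$ with $\mu(\Gamma^{\mathfrak{c}}_f(z))=0$ for every $z\in B(x,\mathfrak{c})$; $UE^\mu_f(X)$ is the set of such points. $x$ is a uniformly measure expansive point of $f$ if there is $\mathfrak{c}>0$ such that for every non-atomic Borel measure $\nu$ on $X$,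 $\nu(\Gamma^{\mathfrak{c}}_f(z))=0$ for every $z\in B(x,\mathfrak{c})$; $UE^M_f(X)$ is the set of such points. A $\delta$-pseudo orbit for $f$ is $\{x_n\}_{n\in\mathbb{Z}}$ with $d(f(x_n),x_{n+1})<\delta$ for all $n$; it is through a set $B$ if $x_0\in B$; it is $\epsilon$-traced if there is $y\in X$ with $d(f^n(y),x_n)<\epsilon$ for all $n$. $\mu$ has shadowing (w.r.t. $f$) if for every $\epsilon>0$ there are $\delta>0$ and a Borel set $B$ with $\mu(X\setminus B)=0$ such that every $\delta$-pseudo orbit through $B$ is $\epsilon$-traced. $x$ is a $\mu$-shadowable point of $f$ if for every $\epsilon>0$ there are $\delta>0$ and a Borel set $B$ with $\mu(X\setminus B)=0$ such that every $\delta$-pseudo orbit through $B\cap B(x,\delta)$ is $\epsilon$-traced; $Sh^\mu_f(X)$ is the set of such points. *)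

(* Defs.v *)
From HB Require Import structures.
From mathcomp Require Import all_boot all_order all_algebra.
From mathcomp Require Import all_classical all_reals all_analysis.
Set Implicit Arguments. Unset Strict Implicit. Unset Printing Implicit Defensive.
Import Order.TTheory GRing.Theory Num.Theory.
Local Open Scope classical_set_scope.
Local Open Scope ring_scope.

Section Dyn.
Variables (R : realType) (disp : measure_display) (X : measurableType disp).
Variable dist : X -> X -> R.

Definition is_metric : Prop :=
  (forall x y, 0 <= dist x y) /\ (forall x y, dist x y = 0 <-> x = y) /\
  (forall x y, dist x y = dist y x) /\
  (forall x y z, dist x z <= dist x y + dist y z).

Definition mball (x : X) (e : R) : set X := [set y | dist x y < e].

Definition dopen (U : set X) : Prop :=
  forall x, U x -> exists2 e : R, 0 < e & mball x e `<=` U.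

Definition dcompact : Prop :=
  forall (I : Type) (U : I -> set X), (forall i, dopen (U i)) ->
    (forall x, exists i, U i x) ->
    exists (n : nat) (h : 'I_n -> I), forall x, exists j : 'I_n, U (h j) x.

Definition dcontinuous (h : X -> X) : Prop :=
  forall x (e : R), 0 < e -> exists2 d : R, 0 < d &
    forall y, dist x y < d -> dist (h x) (h y) < e.

Definition borel_structure : Prop :=
  (@measurable _ X) = <<s dopen >>.

Definition homeo (f g : X -> X) : Prop :=
  cancel f g /\ cancel g f /\ dcontinuous f /\ dcontinuous g.

Variables (f g : X -> X).

(* integer iterates: f^n for n : int, with f^(-k) = g^k *)
Definition iterz (n : int) (x : X) : X :=
  match n with
  | Posz k => iter k f x
  | Negz k => iter k.+1 g x
  end.

Definition Phi (c : R) (x : X) : set X :=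
  [set y | forall n : int, dist (iterz n x) (iterz n y) <= c].

Definition non_atomic (nu : {measure set X -> \bar R}) : Prop :=
  forall x, nu [set x] = 0%E.

Definition expansive_measure (mu : {measure set X -> \bar R}) : Prop :=
  exists2 c : R, 0 < c & forall x, mu (Phi c x) = 0%E.

Definition measure_expansive : Prop :=
  exists2 c : R, 0 < c & forall nu : {measure set X -> \bar R},
    non_atomic nu -> forall x, nu (Phi c x) = 0%E.

Definition Gamma (c : R) (x z : X) : set X :=
  [set y | mball x c y /\ forall n : int, dist (iterz n y) (iterz n z) <= c].

Definition UE_mu (mu : {measure set X -> \bar R}) : set X :=
  [set x | exists2 c : R, 0 < c &
     forall z, mball x c z -> mu (Gamma c x z) = 0%E].

Definition UE_M : set X :=
  [set x | exists2 c : R, 0 < c & forall nu : {measure set X -> \bar R},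
     non_atomic nu -> forall z, mball x c z -> nu (Gamma c x z) = 0%E].

Definition pseudo_orbit (delta : R) (xs : int -> X) : Prop :=
  forall n : int, dist (f (xs n)) (xs (n + 1)) < delta.

Definition traced (eps : R) (xs : int -> X) : Prop :=
  exists y, forall n : int, dist (iterz n y) (xs n) < eps.

Definition has_shadowing (mu : {measure set X -> \bar R}) : Prop :=
  forall eps : R, 0 < eps -> exists2 delta : R, 0 < delta &
    exists B : set X, measurable B /\ mu (~` B) = 0%E /\
      forall xs, pseudo_orbit delta xs -> B (xs 0) -> traced eps xs.

Definition Sh_mu (mu : {measure set X -> \bar R}) : set X :=
  [set x | forall eps : R, 0 < eps -> exists2 delta : R, 0 < delta &
    exists B : set X, measurable B /\ mu (~` B) = 0%E /\
      forall xs, pseudo_orbit delta xs -> (B `&` mball x delta) (xs 0) ->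
        traced eps xs].

End Dyn.

(* Main.v *)
Require Import Defs.
From HB Require Import structures.
From mathcomp Require Import all_boot all_order all_algebra.
From mathcomp Require Import all_classical all_reals all_analysis.
From mathcomp Require Import lra.
Import Order.TTheory GRing.Theory Num.Theory.
Local Open Scope classical_set_scope.
Local Open Scope ring_scope.

Section Helpers.
Variables (R : realType) (disp : measure_display) (X : measurableType disp).
Variable dist : X -> X -> R.
Hypothesis hm : is_metric dist.
Hypothesis hb : borel_structure dist.

Lemma dist_sym x y : dist x y = dist y x.
Proof. by case: hm => _ [_ [h _]]. Qed.
Lemma dist_tri x y z : dist x z <= dist x y + dist y z.
Proof. by case: hm => _ [_ [_ h]]. Qed.
Lemma dist_ge0 x y : 0 <= dist x y.
Proof. by case: hm. Qed.
Lemma dist_xx x : dist x x = 0.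
Proof. by case: hm => _ [h _]; apply/h. Qed.

Lemma dopen_meas U : dopen dist U -> measurable U.
Proof. by move=> hU; rewrite hb; apply: sub_sigma_algebra. Qed.

Lemma mball_open x e : dopen dist (mball dist x e).
Proof.
move=> y /= hy; exists (e - dist x y); first by rewrite subr_gt0.
move=> z /= hz; apply: (le_lt_trans (dist_tri x y z)).
by rewrite -ltrBrDl.
Qed.

Lemma dcont_comp (a b : X -> X) : dcontinuous dist a -> dcontinuous dist b ->
  dcontinuous dist (a \o b).
Proof.
move=> ha hbb x e e0; have [d1 d10 h1] := ha (b x) e e0.
have [d2 d20 h2] := hbb x d1 d10.
by exists d2 => // y /h2 /h1.
Qed.

Lemma dcont_id : dcontinuous dist id.
Proof. by move=> x e e0; exists e. Qed.

Lemma dcont_iter (a : X -> X) k : dcontinuous dist a -> dcontinuous dist (iter k a).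
Proof.
move=> ha; elim: k => [|k IH]; first exact: dcont_id.
have -> : iter k.+1 a = a \o iter k a by apply: funext => y.
exact: dcont_comp.
Qed.

Lemma iterz_cont f g n : dcontinuous dist f -> dcontinuous dist g ->
  dcontinuous dist (iterz f g n).
Proof. by move=> hf hg; case: n => k /=; apply: dcont_iter. Qed.

Lemma Phi_meas f g c x : dcontinuous dist f -> dcontinuous dist g ->
  measurable (Phi dist f g c x).
Proof.
move=> hf hg; rewrite -[Phi _ _ _ _ _]setCK; apply: measurableC.
apply: dopen_meas => y /= hy.
have [n hn] : exists n, c < dist (iterz f g n x) (iterz f g n y).
  apply: contra_notP hy => hn n; rewrite leNgt; apply/negP => h; apply: hn.
  by exists n.
have [d d0 hd] := iterz_cont f g n hf hg y (dist (iterz f g n x) (iterz f g n y) - c)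
  (ltac:(by rewrite subr_gt0)).
exists d => // z /= /hd hz hP; have := hP n.
have := dist_tri (iterz f g n x) (iterz f g n z) (iterz f g n y).
rewrite (dist_sym (iterz f g n z)) => h1 h2.
have : dist (iterz f g n x) (iterz f g n y) < c + (dist (iterz f g n x) (iterz f g n y) - c).
  apply: (le_lt_trans h1); lra.
by rewrite addrC subrK ltxx.
Qed.

Lemma Gamma_eq f g c x z : Gamma dist f g c x z = mball dist x c `&` Phi dist f g c z.
Proof.
apply/seteqP; split => y /= [h1 h2]; split => // n; by rewrite dist_sym.
Qed.

Lemma Gamma_meas f g c x z : dcontinuous dist f -> dcontinuous dist g ->
  measurable (Gamma dist f g c x z).
Proof.
move=> hf hg; rewrite Gamma_eq; apply: measurableI; last exact: Phi_meas.
exact/dopen_meas/mball_open.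
Qed.

End Helpers.
Arguments dist_sym {R disp X dist}.
Arguments dist_tri {R disp X dist}.
Arguments dist_ge0 {R disp X dist}.
Arguments dist_xx {R disp X dist}.
Arguments dopen_meas {R disp X dist}.
Arguments mball_open {R disp X dist}.
Arguments dcont_comp {R disp X dist}.
Arguments dcont_id {R disp X dist}.
Arguments dcont_iter {R disp X dist}.
Arguments iterz_cont {R disp X dist}.
Arguments Phi_meas {R disp X dist}.
Arguments Gamma_eq {R disp X dist}.
Arguments Gamma_meas {R disp X dist}.

Lemma fin_min (R : realType) n (a : 'I_n -> R) : (forall j, 0 < a j) ->
  exists2 c, 0 < c & forall j, c <= a j.
Proof.
elim: n a => [|n IH] a ha; first by exists 1 => // -[].
have [c c0 hc] := IH (fun j => a (lift ord0 j)) (fun j => ha _).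
exists (Order.min c (a ord0)); first by rewrite lt_min c0 ha.
move=> j; case: (unliftP ord0 j) => [j' ->|->]; rewrite ge_min ?lexx ?orbT //.
by rewrite hc.
Qed.

Lemma setTE (T : Type) (A : set T) : A = setT <-> forall x, A x.
Proof. split; [by move=> -> | by move=> h; apply/seteqP; split => // x _; apply: h]. Qed.


Lemma ue_equiv (R : realType) (disp : measure_display) (X : measurableType disp)
  (dist : X -> X -> R) (f g : X -> X) (N : set X -> Prop) :
  is_metric dist -> dcompact dist -> borel_structure dist ->
  dcontinuous dist f -> dcontinuous dist g ->
  (forall A B, measurable A -> measurable B -> A `<=` B -> N B -> N A) ->
  (exists2 c : R, 0 < c & forall x, N (Phi dist f g c x)) <->
  (forall x, exists2 c : R, 0 < c &
      forall z, mball dist x c z -> N (Gamma dist f g c x z)).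
Proof.
move=> hm hc hb hf hg Nmono; split.
  move=> [c c0 hcx] x; exists c => // z _.
  apply: (Nmono _ (Phi dist f g c z)); [exact: (Gamma_meas hm hb)|exact: (Phi_meas hm hb)| |exact: hcx].
  by rewrite (Gamma_eq hm) => y [].
move=> h.
pose I := {p : X * R | 0 < p.2 /\ forall z, mball dist p.1 p.2 z -> N (Gamma dist f g p.2 p.1 z)}.
have hcover : forall x, exists i : I, mball dist (sval i).1 ((sval i).2/2) x.
  move=> x; have [c c0 hx] := h x.
  exists (exist _ (x, c) (conj c0 hx)); rewrite /mball /= (dist_xx hm) //; exact: divr_gt0.
have [n [hh hcov]] := hc I (fun p => mball dist (sval p).1 ((sval p).2/2))
  (fun p => mball_open hm _ _) hcover.
have [c c0 hcm] := @fin_min R n (fun j => (sval (hh j)).2/2) (fun j => ltac:(apply: divr_gt0 => //; case: (hh j) => p [] //)).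
exists c => // x; have [j hj] := hcov x.
have hcj := hcm j; move: hj hcj => /=; case: (hh j) => [[x0 c1] [/= hc1 hN]] /= hj hcj.
have hxb : mball dist x0 c1 x.
 rewrite /mball /= in hj *; lra.
apply: (Nmono _ _ _ _ _ (hN x hxb)); [exact: (Phi_meas hm hb)|exact: (Gamma_meas hm hb)|].
move=> y hy; split.
  have := hy 0%R; rewrite /= => h0.
  have := dist_tri hm x0 x y; rewrite /mball /= in hj *; lra.
move=> k; rewrite (dist_sym hm); apply: le_trans (hy k) _; lra.
Qed.

Lemma fin_comb (R : realType) (disp : measure_display) (X : measurableType disp)
  (mu : {measure set X -> \bar R}) n (d : 'I_n -> R) (B : 'I_n -> set X) :
  (forall j, 0 < d j) -> (forall j, measurable (B j)) ->
  (forall j, mu (~` B j) = 0%E) ->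
  exists d0 B0, 0 < d0 /\ measurable B0 /\ mu (~` B0) = 0%E /\
    forall j, d0 <= d j /\ B0 `<=` B j.
Proof.
elim: n d B => [|n IH] d B hd hB hN.
  exists 1, setT; split => //; split => //; split; last by case.
  by rewrite setCT measure0.
have [d0 [B0 [d00 [mB0 [nB0 hj]]]]] := IH (fun j => d (lift ord0 j)) (fun j => B (lift ord0 j))
  (fun j => hd _) (fun j => hB _) (fun j => hN _).
exists (Order.min d0 (d ord0)), (B0 `&` B ord0); split; first by rewrite lt_min d00 hd.
split; first exact: measurableI.
split.
  apply/eqP; rewrite eq_le measure_ge0 andbT setCI.
  apply: le_trans (measureU2 _ _ _) _; try exact: measurableC.
  change (mu (~` B0) + mu (~` B ord0) <= 0)%E; by rewrite nB0 hN adde0.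
move=> j; case: (unliftP ord0 j) => [j' ->|->].
  by have [h1 h2] := hj j'; rewrite ge_min h1; split => // y [/h2].
by rewrite ge_min lexx orbT; split => // y [].
Qed.

Lemma sh_equiv (R : realType) (disp : measure_display) (X : measurableType disp)
  (dist : X -> X -> R) (f g : X -> X) (mu : {measure set X -> \bar R}) :
  is_metric dist -> dcompact dist ->
  has_shadowing dist f g mu <-> Sh_mu dist f g mu = setT.
Proof.
move=> hm hc; rewrite setTE; split.
  move=> hs x eps e0; have [d d0 [B [mB [nB hB]]]] := hs eps e0.
  exists d => //; exists B; split => //; split => // xs hxs [hB0 _]; exact: hB.
move=> h eps e0.
pose I := {p : X * R * set X | 0 < p.1.2 /\ measurable p.2 /\ mu (~` p.2) = 0%E /\
  forall xs, pseudo_orbit dist f p.1.2 xs -> (p.2 `&` mball dist p.1.1 p.1.2) (xs 0%R) ->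
    traced dist f g eps xs}.
have hcover : forall x, exists i : I, mball dist (sval i).1.1 (sval i).1.2 x.
  move=> x; have [d d0 [B [mB [nB hB]]]] := h x eps e0.
  exists (exist _ (x, d, B) (conj d0 (conj mB (conj nB hB)))).
  by rewrite /mball /= (dist_xx hm).
have [n [hh hcov]] := hc I (fun p => mball dist (sval p).1.1 (sval p).1.2)
  (fun p => mball_open hm _ _) hcover.
have [d0 [B0 [d00 [mB0 [nB0 hj]]]]] := @fin_comb R disp X mu n
  (fun j => (sval (hh j)).1.2) (fun j => (sval (hh j)).2)
  (fun j => proj1 (proj2_sig (hh j))) (fun j => proj1 (proj2 (proj2_sig (hh j))))
  (fun j => proj1 (proj2 (proj2 (proj2_sig (hh j))))).
exists d0 => //; exists B0; split => //; split => // xs hpo hB0.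
have [j hxj] := hcov (xs 0%R).
have := hj j; move: hxj => /=; case: (hh j) => [[[x1 d1] B1] [/= hd1 [mB1 [nB1 hT]]]] /= hxj [hdj hBj].
apply: hT; last by split => //; exact: hBj.
by move=> k; apply: lt_le_trans (hpo k) _.
Qed.

Theorem proposition3p4 (R : realType) (disp : measure_display)
  (X : measurableType disp) (dist : X -> X -> R) (f g : X -> X)
  (mu : {measure set X -> \bar R}) :
  is_metric dist -> dcompact dist -> borel_structure dist ->
  homeo dist f g -> (0 < mu setT)%E ->
  [/\ expansive_measure dist f g mu <-> UE_mu dist f g mu = setT,
      measure_expansive dist f g <-> UE_M dist f g = setT &
      has_shadowing dist f g mu <-> Sh_mu dist f g mu = setT].
Proof.
move=> hm hc hb [_ [_ [hf hg]]] _; split.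
- rewrite setTE; apply: (@ue_equiv R disp X dist f g (fun A => mu A = 0%E)) => //.
  move=> A B mA mB AB hB; apply/eqP; rewrite eq_le measure_ge0 andbT -hB.
  by apply: le_measure => //; rewrite inE.
- rewrite setTE.
  have [h1 h2] := @ue_equiv R disp X dist f g
    (fun A => forall nu : {measure set X -> \bar R}, non_atomic nu -> nu A = 0%E) hm hc hb hf hg
    (fun A B mA mB AB hB nu hnu => ltac:(apply/eqP; rewrite eq_le measure_ge0 andbT -(hB nu hnu);
        by apply: le_measure => //; rewrite inE)).
  split.
    move=> [c c0 hcx] x.
    have [c' c'0 hc'] := h1 (ex_intro2 _ _ c c0 (fun x nu hnu => hcx nu hnu x)) x.
    by exists c' => // nu hnu z hz; exact: hc' z hz nu hnu.
  move=> hx.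
  have : forall x, exists2 c : R, 0 < c & forall z, mball dist x c z ->
      forall nu : {measure set X -> \bar R}, non_atomic nu -> nu (Gamma dist f g c x z) = 0%E.
    by move=> x; have [c c0 hcx] := hx x; exists c => // z hz nu hnu; exact: hcx.
  move/h2 => [c c0 hcx]; exists c => // nu hnu x; exact: hcx.
- exact: sh_equiv.
Qed.
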